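(* Let $X,Y$ be connected FDSs with $[X]_0=[Y]_0$. If $\widetilde{X}=\widetilde{Y}$ (as forests, up to isomorphism), then $X=Y$.
   Context: A finite dynamical system (FDS) is a function $A:S_A\to S_A$ on a finite set, considered up to isomorphism of functional graphs (arcs $x\to A(x)$); it is connected if its functional graph is weakly connected. Write $A^{\circ m}$ for the $m$-fold iterate of $A$. A state $s$ is a cycle state if $A^{\circ m}(s)=s$ for some $m>0$. The depth of a state is $0$ for cycle states and $\operatorname{depth}(A(s))+1$ otherwise; $[A]_0$ is the restriction of $A$ to its cycle states. The unrolling $\widetilde{A}$ of $A$ is the forest whose vertex set is $\{(s,k)\in S_A\times\mathbb{N}: A^{\circ k}(s)\text{ is a cycle state}\}$, with an arc $(s,k)\to(A(s),k-1)$ for each such vertex with $k\ge1$; its roots are the vertices $(a,0)$ with $a$ a cycle state (so it is a disjoint union of one infinite rooted in-tree per cycle state). *)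

(* Defs.v *)
From mathcomp Require Import all_boot.
Set Implicit Arguments. Unset Strict Implicit. Unset Printing Implicit Defensive.

(* An FDS is a map X : T -> T on a finite type T. *)

Definition fds_iso (A B : Type) (f : A -> A) (g : B -> B) : Prop :=
  exists phi : A -> B, bijective phi /\ forall a, phi (f a) = g (phi a).

Definition graph_iso (A B : Type) (ra : A -> A -> Prop) (rb : B -> B -> Prop) : Prop :=
  exists phi : A -> B, bijective phi /\ forall u v, ra u v <-> rb (phi u) (phi v).

Definition fds_connected (T : finType) (X : T -> T) : Prop :=
  forall x y : T, connect (fun a b => (X a == b) || (X b == a)) x y.

Definition cycle_state (T : Type) (X : T -> T) (s : T) : Prop :=
  exists m, 0 < m /\ iter m X s = s.

Lemma cycle_state_step (T : Type) (X : T -> T) (s : T) :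
  cycle_state X s -> cycle_state X (X s).
Proof.
case=> [[|m] [Hm Hs]] //; exists m.+1; split => //.
by rewrite -iterSr iterS Hs.
Qed.

(* [X]_0 : restriction of X to its cycle states. *)
Definition cycle_part (T : Type) (X : T -> T) : {s | cycle_state X s} -> {s | cycle_state X s} :=
  fun s => exist _ (X (sval s)) (cycle_state_step (proj2_sig s)).

Definition unroll_vertex (T : Type) (X : T -> T) : Type :=
  {p : T * nat | cycle_state X (iter p.2 X p.1)}.

Definition unroll_arc (T : Type) (X : T -> T) (u v : unroll_vertex X) : Prop :=
  0 < (sval u).2 /\ sval v = (X (sval u).1, (sval u).2.-1).
Arguments cycle_part [T] X _.
Arguments unroll_arc [T] X _ _.

(* Main.v *)
Require Import Defs.
From mathcomp Require Import all_boot zify.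
From Stdlib Require Import ProofIrrelevance.
Set Implicit Arguments. Unset Strict Implicit. Unset Printing Implicit Defensive.

Lemma sig_eqP (A : Type) (P : A -> Prop) (u v : {x | P x}) :
  sval u = sval v -> u = v.
Proof.
case: u v => [x Hx] [y Hy] /= E; subst y; congr exist; apply: proof_irrelevance.
Qed.

Lemma iter_comm (A : Type) (f : A -> A) n m x :
  iter n f (iter m f x) = iter m f (iter n f x).
Proof. by rewrite -!iterD addnC. Qed.

Lemma cyc_iter (A : Type) (X : A -> A) s n :
  cycle_state X s -> cycle_state X (iter n X s).
Proof. by move=> H; elim: n => //= n IH; apply: cycle_state_step. Qed.

Lemma iter_per (A : Type) (X : A -> A) m x k :
  iter m X x = x -> iter (m * k) X x = x.
Proof.
move=> H; elim: k => [|k IH]; first by rewrite muln0.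
by rewrite mulnS iterD IH H.
Qed.

Lemma pigeon (T : finType) (X : T -> T) s : cycle_state X (iter #|T| X s).
Proof.
pose f := fun i : 'I_#|T|.+1 => iter i X s.
have [/existsP [i /existsP [j /andP [lij /eqP fij]]] | H] :=
  boolP [exists i : 'I_#|T|.+1, exists j : 'I_#|T|.+1, (i < j) && (f i == f j)].
  have ci : cycle_state X (iter i X s).
    exists (j - i); split; first by rewrite subn_gt0.
    by rewrite -iterD subnK ?(ltnW lij) //.
  have := cyc_iter (#|T| - i) ci; rewrite -iterD subnK //.
  by rewrite -ltnS.
exfalso.
have injf : injective f.
  move=> i j fij; apply: val_inj; apply/eqP; case: (ltngtP i j) => // lij.
  - by move: H; rewrite negb_exists => /forallP /(_ i); rewrite negb_exists
        => /forallP /(_ j); rewrite lij fij eqxx.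
  - by move: H; rewrite negb_exists => /forallP /(_ j); rewrite negb_exists
        => /forallP /(_ i); rewrite lij fij eqxx.
by have := leq_card f injf; rewrite card_ord ltnn.
Qed.

Lemma pigeon_ge (T : finType) (X : T -> T) s n : #|T| <= n -> cycle_state X (iter n X s).
Proof. by move=> H; rewrite -(subnK H) iterD; apply: cyc_iter; apply: pigeon. Qed.

Lemma conn_cyc (T : finType) (X : T -> T) c c' :
  fds_connected X -> cycle_state X c -> cycle_state X c' ->
  exists i, iter i X c = c'.
Proof.
move=> HC _ [m [m0 Hm]].
pose P x := exists i j, iter i X x = iter j X c.
have step : forall z y, (X z == y) || (X y == z) -> P z -> P y.
  move=> z y /orP [] /eqP E [i [j Hij]].
  - case: i Hij => [|i] /= Hij.
      by exists 0, j.+1; rewrite /= -E Hij.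
    by exists i, j; rewrite -E -iterSr.
  - by exists i.+1, j; rewrite iterSr E.
have Pall : forall x, P x.
  have gen : forall p z, path (fun a b => (X a == b) || (X b == a)) z p -> P z -> P (last z p).
    elim=> [|y p IH] z //= /andP [e Hp] Pz.
    exact: (IH y Hp (step _ _ e Pz)).
  move=> x; have /connectP [p Hp ->] := HC c x.
  by apply: gen => //; exists 0, 0.
have [i [j Hij]] := Pall c'.
exists (m * i - i + j).
have le : i <= m * i by rewrite leq_pmull.
by rewrite iterD -Hij -iterD (subnK le) iter_per.
Qed.

Definition mkV (A : Type) (X : A -> A) (s : A) (k : nat)
  (H : cycle_state X (iter k X s)) : unroll_vertex X := exist _ (s, k) H.

Lemma chain (A B : Type) (X : A -> A) (Y : B -> B)
  (phi : unroll_vertex X -> unroll_vertex Y)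
  (hom : forall u v, unroll_arc X u v -> unroll_arc Y (phi u) (phi v)) :
  forall n u v, n <= (sval u).2 ->
  sval v = (iter n X (sval u).1, (sval u).2 - n) ->
  (sval (phi v)).1 = iter n Y (sval (phi u)).1 /\
  (sval (phi v)).2 = (sval (phi u)).2 - n.
Proof.
elim=> [|n IH] u v.
  move=> _ E; have -> : v = u by apply: sig_eqP; rewrite E subn0 /=; case: (sval u).
  by rewrite subn0.
move=> Hn E.
have pos : 0 < (sval u).2 by apply: leq_trans Hn.
have Hc : cycle_state X (iter (sval u).2.-1 X (X (sval u).1)).
  by rewrite -iterSr prednK //; exact: (proj2_sig u).
pose u' := mkV Hc.
have a : unroll_arc X u u' by split.
have [p1 p2] := hom _ _ a.
have [IH1 IH2] := IH u' v ltac:(rewrite /=; lia) ltac:(rewrite E /= -iterSr; congr pair; lia).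
rewrite IH1 IH2 p2 /= -iterSr; split => //; lia.
Qed.

Lemma iso_inv (A B : Type) (ra : A -> A -> Prop) (rb : B -> B -> Prop)
  (phi : A -> B) (g : B -> A) :
  cancel phi g -> cancel g phi ->
  (forall u v, ra u v <-> rb (phi u) (phi v)) ->
  (forall u v, rb u v <-> ra (g u) (g v)).
Proof. by move=> c1 c2 H u v; rewrite H !c2. Qed.

Lemma level_le (A B : Type) (X : A -> A) (Y : B -> B)
  (phi : unroll_vertex X -> unroll_vertex Y) (g : unroll_vertex Y -> unroll_vertex X) :
  cancel phi g -> cancel g phi ->
  (forall u v, unroll_arc X u v <-> unroll_arc Y (phi u) (phi v)) ->
  forall u, (sval (phi u)).2 <= (sval u).2.
Proof.
move=> c1 c2 H u.
have L0 : forall w, (sval w).2 = 0 -> (sval (phi w)).2 = 0.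
  move=> w w0; case E: (sval (phi w)).2 => [|k] //.
  have Hc : cycle_state Y (iter (sval (phi w)).2.-1 Y (Y (sval (phi w)).1)).
    rewrite -iterSr prednK; last by rewrite E.
    exact: (proj2_sig (phi w)).
  pose w' := mkV Hc.
  have a : unroll_arc Y (phi w) w' by split => //; rewrite E.
  move: a; rewrite -(c2 w') -H => [[]]; by rewrite w0.
have Hc : cycle_state X (iter 0 X (iter (sval u).2 X (sval u).1)) by exact: (proj2_sig u).
have [_ E2] := chain (fun u v => proj1 (H u v)) (v := mkV Hc) (leqnn _) ltac:(by rewrite subnn).
by move: (L0 (mkV Hc) erefl); rewrite E2 => /eqP; rewrite subn_eq0.
Qed.

Lemma level_eq (A B : Type) (X : A -> A) (Y : B -> B)
  (phi : unroll_vertex X -> unroll_vertex Y) (g : unroll_vertex Y -> unroll_vertex X) :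
  cancel phi g -> cancel g phi ->
  (forall u v, unroll_arc X u v <-> unroll_arc Y (phi u) (phi v)) ->
  forall u, (sval (phi u)).2 = (sval u).2.
Proof.
move=> c1 c2 H u; apply/eqP; rewrite eqn_leq (level_le c1 c2 H) /=.
have := level_le c2 c1 (iso_inv c1 c2 H) (phi u); by rewrite c1.
Qed.

Lemma push_cyc (B : Type) (A : finType) (Y : B -> B) (X : A -> A)
  (h : unroll_vertex Y -> unroll_vertex X)
  (hom : forall u v, unroll_arc Y u v -> unroll_arc X (h u) (h v)) :
  forall u, cycle_state Y (sval u).1 -> cycle_state X (sval (h u)).1.
Proof.
move=> u [m [m0 Hm]].
set t := (sval u).1; set k := (sval u).2; set n := #|A|.
have Hc : cycle_state Y (iter (k + n) Y (iter (m * n - n) Y t)).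
  rewrite -iterD; apply: cyc_iter; exists m; split => //.
have le : n <= m * n by rewrite leq_pmull.
have [E1 _] := chain hom (u := mkV Hc) (v := u) (n := n) ltac:(rewrite /=; lia)
  ltac:(rewrite /= -iterD (subnKC le) iter_per // addnK /t /k; by case: (sval u)).
rewrite E1; exact: pigeon.
Qed.

Lemma sval_iter (A : Type) (X : A -> A) m x :
  sval (iter m (cycle_part X) x) = iter m X (sval x).
Proof. by elim: m => //= m ->. Qed.

Lemma half (T U : finType) (X : T -> T) (Y : U -> U) :
  fds_connected X -> fds_connected Y ->
  fds_iso (cycle_part X) (cycle_part Y) ->
  graph_iso (unroll_arc X) (unroll_arc Y) ->
  exists psi : T -> U, injective psi /\ forall s, psi (X s) = Y (psi s).
Proof.
move=> CX CY [chi [chib chihom]] [phi [phib phiH]].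
case: phib => g c1 c2; case: chib => chi' d1 d2.
have hom : forall u v, unroll_arc X u v -> unroll_arc Y (phi u) (phi v) := fun u v => proj1 (phiH u v).
have homg : forall u v, unroll_arc Y u v -> unroll_arc X (g u) (g v) := fun u v => proj1 (iso_inv c1 c2 phiH u v).
case: (pickP (fun _ : T => true)) => [x0 _ | HT]; last first.
  exists (fun s => False_rect U (Bool.diff_true_false (HT s))).
  by split => [s|s]; have := HT s.
pose a := iter #|T| X x0.
have Ha : cycle_state X a := pigeon X x0.
have reach : forall s, exists k, iter k X s == a.
  move=> s; have [i Hi] := conn_cyc CX (pigeon X s) Ha.
  by exists (i + #|T|); rewrite iterD Hi.
pose dist s := ex_minn (reach s).
have D1 : forall s, iter (dist s) X s = a.
  by move=> s; rewrite /dist; case: ex_minnP => m /eqP.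
have D2 : forall s k, iter k X s = a -> dist s <= k.
  by move=> s k Hk; rewrite /dist; case: ex_minnP => m _ Hmin; apply: Hmin; apply/eqP.
have Da : dist a = 0 by apply/eqP; rewrite -leqn0; apply: D2.
have D3 : forall s, s <> a -> 0 < dist s /\ dist (X s) = (dist s).-1.
  move=> s ne; have pos : 0 < dist s.
    by case E: (dist s) => //; have := D1 s; rewrite E.
  split => //; apply/eqP; rewrite eqn_leq; apply/andP; split.
    by apply: D2; rewrite -iterSr prednK // D1.
  have := D2 s (dist (X s)).+1 ltac:(by rewrite iterSr D1); lia.
have D5 : forall s k, k <= dist s -> dist (iter k X s) = dist s - k.
  move=> s; elim=> [|k IH] le; first by rewrite subn0.
  rewrite iterS; have ne : iter k X s <> a by move=> E; have := D2 _ _ E; lia.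
  have [_ ->] := D3 _ ne; rewrite IH; [lia | exact: ltnW].
pose L := (dist (X a)).+1.
have L0 : 0 < L by [].
have HL : iter L X a = a by rewrite /L iterSr D1.
have Lmin : forall m, 0 < m -> iter m X a = a -> L <= m.
  move=> m m0 Hm; rewrite /L.
  have := D2 (X a) m.-1 ltac:(by rewrite -iterSr prednK); lia.
have D4 : forall s, cycle_state X s -> dist s < L.
  move=> s cs; rewrite ltnNge; apply/negP => le.
  have Lq : iter L X (iter (dist s - L) X s) = a by rewrite -iterD subnKC // D1.
  have [j Hj] := conn_cyc CX Ha (cyc_iter (dist s - L) cs).
  have qa : iter (dist s - L) X s = a by rewrite -Lq -Hj iter_comm HL.
  have := D2 _ _ qa; lia.
pose xa : {s | cycle_state X s} := exist _ a Ha.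
have chi_iter : forall m x, chi (iter m (cycle_part X) x) = iter m (cycle_part Y) (chi x).
  by elim=> //= m IH x; rewrite chihom IH.
pose c0 := sval (chi xa).
have Hc0 : cycle_state Y c0 := proj2_sig (chi xa).
have Lc0 : iter L Y c0 = c0.
  rewrite /c0 -sval_iter -chi_iter; congr (sval (chi _)); apply: sig_eqP.
  by rewrite sval_iter.
have Ymin : forall y m, cycle_state Y y -> 0 < m -> iter m Y y = y -> L <= m.
  move=> y m cy m0 Hm; apply: Lmin => //.
  have [j Hj] := conn_cyc CY cy Hc0.
  have Hm0 : iter m Y c0 = c0 by rewrite -Hj iter_comm Hm.
  have : iter m (cycle_part X) xa = xa.
    apply: (can_inj d1); rewrite chi_iter; apply: sig_eqP; rewrite sval_iter; exact: Hm0.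
  by move=> /(congr1 sval); rewrite sval_iter.
have lev := level_eq c1 c2 phiH.
have pull : forall u, cycle_state Y (sval (phi u)).1 -> cycle_state X (sval u).1.
  by move=> u cy; have := push_cyc homg cy; rewrite c1.
have cycH : forall s, cycle_state X (iter (dist s) X s) by move=> s; rewrite D1.
pose vx s := mkV (cycH s).
pose psi s := (sval (phi (vx s))).1.
pose b := psi a.
have toroot : forall s, iter (dist s) Y (psi s) = b.
  move=> s; have [E1 _] := chain hom (u := vx s) (v := vx a) (n := dist s) (leqnn _)
    ltac:(by rewrite /= D1 subnn Da).
  by rewrite /b /psi -E1.
pose u := mkV (cyc_iter L Ha : cycle_state X (iter L X a)).
pose c := (sval (phi u)).1.
have ccyc : cycle_state Y c.
  pose w := mkV (cyc_iter (L * #|U|.+1) Ha : cycle_state X (iter (L * #|U|.+1) X a)).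
  have [E1 _] := chain hom (u := w) (v := u) (n := L * #|U|)
    ltac:(rewrite /= mulnS; lia) ltac:(rewrite /= iter_per // mulnS; congr pair; lia).
  rewrite /c E1; apply: pigeon_ge; by rewrite leq_pmull.
have bc : b = c.
  have [E1 _] := chain hom (u := u) (v := vx a) (n := L) (leqnn _)
    ltac:(by rewrite HL subnn; congr pair).
  have [i Hi] := conn_cyc CY Hc0 ccyc.
  by rewrite /b /psi E1 -/c -Hi iter_comm Lc0.
have bcyc : cycle_state Y b by rewrite bc.
exists psi; split; last first.
  move=> s; case: (eqVneq s a) => [->|ne].
    have ar : unroll_arc X u (vx (X a)) by split.
    have [_ E] := hom _ _ ar.
    by rewrite /psi E /= -/c -/(psi a) -/b bc.
  have [pos E3] := D3 _ (elimN eqP ne).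
  have ar : unroll_arc X (vx s) (vx (X s)) by split => //=; rewrite E3.
  have [_ E] := hom _ _ ar.
  by rewrite /psi E.
have inj_le : forall s1 s2, psi s1 = psi s2 -> dist s1 <= dist s2 -> s1 = s2.
  move=> s1 s2 E le.
  have [lt|eq] : dist s1 < dist s2 \/ dist s1 = dist s2 by lia.
    exfalso.
    have Hv : cycle_state X (iter (dist s2 - dist s1) X (iter (dist s1) X s2)).
      by rewrite -iterD subnK ?D1 // ltnW.
    have [E1 _] := chain hom (u := vx s2) (v := mkV Hv) (n := dist s1) (ltnW lt) erefl.
    have Eb : (sval (phi (mkV Hv))).1 = b by rewrite E1 -/(psi s2) -E toroot.
    have cv : cycle_state X (iter (dist s1) X s2) by apply: (pull (mkV Hv)); rewrite Eb.
    have := D4 _ cv; rewrite D5 ?(ltnW lt) // => lt2.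
    have : L <= dist s2 - dist s1.
      apply: (Ymin b) => //; first by rewrite subn_gt0.
      by rewrite -{1}(toroot s1) E -iterD subnK ?toroot // ltnW.
    lia.
  have : phi (vx s1) = phi (vx s2).
    apply: sig_eqP; rewrite [sval (phi (vx s1))]surjective_pairing
      [sval (phi (vx s2))]surjective_pairing !lev /=.
    by rewrite -/(psi s1) -/(psi s2) E eq.
  by move=> /(congr1 g); rewrite !c1 => /(congr1 (fun v => (sval v).1)).
move=> s1 s2 E; case: (leqP (dist s1) (dist s2)) => le.
  exact: inj_le.
by symmetry; apply: inj_le => //; apply: ltnW.
Qed.

Lemma fds_iso_sym (A B : Type) (f : A -> A) (g : B -> B) :
  fds_iso f g -> fds_iso g f.
Proof.
move=> [chi [[chi' d1 d2] H]]; exists chi'; split; first by exists chi.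
by move=> y; apply: (can_inj d1); rewrite H !d2.
Qed.

Lemma graph_iso_sym (A B : Type) (ra : A -> A -> Prop) (rb : B -> B -> Prop) :
  graph_iso ra rb -> graph_iso rb ra.
Proof.
move=> [phi [[g c1 c2] H]]; exists g; split; first by exists phi.
exact: iso_inv c1 c2 H.
Qed.

Theorem mainTheorem13 (T U : finType) (X : T -> T) (Y : U -> U) :
  fds_connected X -> fds_connected Y ->
  fds_iso (cycle_part X) (cycle_part Y) ->
  graph_iso (unroll_arc X) (unroll_arc Y) ->
  fds_iso X Y.
Proof.
move=> CX CY HC HG.
have [psi [inj hom]] := half CX CY HC HG.
have [psi' [inj' _]] := half CY CX (fds_iso_sym HC) (graph_iso_sym HG).
exists psi; split => //.
by apply: inj_card_bij => //; apply: leq_card inj'.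
Qed.
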